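(* Let $\varphi:S^1\to S^1$ be a minimal orientation preserving circle homeomorphism with irrational rotation number $\varrho$, and fix $\varepsilon>0$. Then there exists a neighbourhood $U$ of $\varphi$ in $C^0(S^1)$ such that for every minimal orientation preserving circle homeomorphism $\tilde\varphi\in U$ with $\varrho(\tilde\varphi)=\varrho$ we have $$\sup_{x_0\in\mathbb{R}}\sup_{n\in\mathbb{N}}|r_n(x_0)-\tilde r_n(x_0)|<\varepsilon,$$ where $r_n(x_0)=\frac12|\mathrm{cosec}(\pi(\Phi^n(x_0)-\Phi^{n-1}(x_0)))|$ and $\tilde r_n(x_0)=\frac12|\mathrm{cosec}(\pi(\tilde\Phi^n(x_0)-\tilde\Phi^{n-1}(x_0)))|$ are the local discrete radii of curvature of the curlicues generated at $x_0$ by lifts $\Phi$ of $\varphi$ and $\tilde\Phi$ of $\tilde\varphi$, respectively.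
   Context: Identify $S^1=\mathbb{R}/\mathbb{Z}$ via $x\mapsto\exp(2\pi\imath x)$; a lift is $\Phi$ with $\Phi(x+1)=\Phi(x)+1$ projecting to the homeomorphism. The curlicue generated at $x_0$ has vertices $z_0=0$, $z_n=\sum_{k=0}^{n-1}\exp(2\pi\imath\Phi^k(x_0))$; its local discrete radius of curvature $r_n$ is the radius of the circle through $z_{n-1},z_n,z_{n+1}$, which equals the formula above and does not depend on the choice of lift. $C^0(S^1)$ carries the uniform topology. *)

(* Defs.v *)
From Stdlib Require Import Reals ZArith.
Open Scope R_scope.

Definition iter (Phi : R -> R) (n : nat) (x : R) : R := Nat.iter n Phi x.

(* Phi is a lift of an orientation preserving circle homeomorphism
   (S^1 = R/Z): continuous, strictly increasing, Phi(x+1) = Phi(x)+1. *)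
Definition circle_lift (Phi : R -> R) : Prop :=
  continuity Phi /\
  (forall x y, x < y -> Phi x < Phi y) /\
  (forall x, Phi (x + 1) = Phi x + 1).

(* The (full, two-sided) orbit of the circle point [x] under the homeomorphism
   with lift Phi contains the circle point [y] iff some forward iterates of x
   and y agree modulo Z. *)
Definition in_orbit (Phi : R -> R) (x y : R) : Prop :=
  exists (n m : nat) (k : Z), iter Phi n y = iter Phi m x + IZR k.

(* Minimality: every orbit is dense in S^1, i.e. the lifted orbit
   (orbit + Z) is dense in R. *)
Definition minimal (Phi : R -> R) : Prop :=
  forall x z eps, 0 < eps -> exists y, in_orbit Phi x y /\ Rabs (y - z) < eps.

(* rho is (a real representative of) the rotation number of the lift Phi *)
Definition is_rotation_number (Phi : R -> R) (rho : R) : Prop :=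
  forall x, Un_cv (fun n => (iter Phi n x - x) / INR n) rho.

Definition irrational (r : R) : Prop :=
  forall p q : Z, q <> 0%Z -> r * IZR q <> IZR p.

Definition circ_dist (a b : R) : R :=
  let d := b - a in Rmin (d - IZR (Int_part d)) (1 - (d - IZR (Int_part d))).

Definition C0_close (Phi Psi : R -> R) (delta : R) : Prop :=
  exists c, c < delta /\ forall x, circ_dist (Phi x) (Psi x) <= c.

Definition radius (Phi : R -> R) (n : nat) (x0 : R) : R :=
  / 2 * Rabs (/ sin (PI * (iter Phi n x0 - iter Phi (n - 1) x0))).

(* Main.v *)
Require Import Defs.
From Stdlib Require Import Reals ZArith.
From Stdlib Require Import Lra Lia Classical ClassicalEpsilon.
Open Scope R_scope.


Lemma iter_S L n x : Defs.iter L (S n) x = L (Defs.iter L n x).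
Proof. reflexivity. Qed.

Lemma iter_0 L x : Defs.iter L 0 x = x.
Proof. reflexivity. Qed.

Lemma iter_add L a b x : Defs.iter L (a + b) x = Defs.iter L a (Defs.iter L b x).
Proof. unfold iter; apply Nat.iter_add. Qed.

Lemma IZR_nat_or_neg (z : Z) : exists m : nat, IZR z = INR m \/ IZR z = - INR m.
Proof.
  destruct (Z_le_gt_dec 0 z).
  - exists (Z.to_nat z); left. rewrite INR_IZR_INZ, Z2Nat.id; auto.
  - exists (Z.to_nat (- z)); right. rewrite INR_IZR_INZ, Z2Nat.id by lia.
    rewrite opp_IZR; ring.
Qed.

Lemma lift_shift_nat L : circle_lift L -> forall m x, L (x + INR m) = L x + INR m.
Proof.
  intros [_ [_ H]] m; induction m; intro x.
  - simpl; rewrite !Rplus_0_r; auto.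
  - rewrite S_INR. replace (x + (INR m + 1)) with ((x + INR m) + 1) by ring.
    rewrite H, IHm; ring.
Qed.

Lemma lift_shift_Z L : circle_lift L -> forall z x, L (x + IZR z) = L x + IZR z.
Proof.
  intros HL z x. destruct (IZR_nat_or_neg z) as [m [E|E]]; rewrite E.
  - apply lift_shift_nat; auto.
  - assert (H := lift_shift_nat L HL m (x + - INR m)).
    replace (x + - INR m + INR m) with x in H by ring. lra.
Qed.

Lemma iter_shift_Z L : circle_lift L -> forall n z x, Defs.iter L n (x + IZR z) = Defs.iter L n x + IZR z.
Proof.
  intros HL n z; induction n; intro x.
  - reflexivity.
  - rewrite !iter_S, IHn. apply lift_shift_Z; auto.
Qed.

Lemma iter_cont L : circle_lift L -> forall n, continuity (Defs.iter L n).
Proof.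
  intros HL n; induction n.
  - unfold iter; simpl. apply derivable_continuous, derivable_id.
  - change (continuity (comp L (Defs.iter L n))). apply continuity_comp; auto.
    apply HL.
Qed.

Lemma iter_mono L : circle_lift L -> forall n x y, x < y -> Defs.iter L n x < Defs.iter L n y.
Proof.
  intros HL n; induction n; intros x y H.
  - exact H.
  - rewrite !iter_S. apply HL. auto.
Qed.

Lemma iter_mono_iff L : circle_lift L -> forall n x y, x < y <-> Defs.iter L n x < Defs.iter L n y.
Proof.
  intros HL n x y; split; [apply iter_mono; auto|].
  intro H. destruct (Rtotal_order x y) as [h|[h|h]]; auto.
  - subst; lra.
  - apply (iter_mono L HL n) in h; lra.
Qed.

Lemma iter_inj L : circle_lift L -> forall n x y, Defs.iter L n x = Defs.iter L n y -> x = y.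
Proof.
  intros HL n x y H. destruct (Rtotal_order x y) as [h|[h|h]]; auto;
  apply (iter_mono L HL n) in h; lra.
Qed.

Lemma subseq_le L rho y q c : is_rotation_number L rho -> (1 <= q)%nat ->
  (forall k, Defs.iter L (k * q) y - y <= INR k * c) -> INR q * rho <= c.
Proof.
  intros Hr Hq Hk. destruct (Rle_dec (INR q * rho) c) as [h|h]; auto. exfalso.
  assert (Hq' : 0 < INR q) by (apply lt_0_INR; lia).
  set (eps := rho - c / INR q).
  assert (He : eps > 0). { unfold eps. apply Rnot_le_lt in h.
    assert (c / INR q < rho); [|lra].
    apply (Rmult_lt_reg_r (INR q)); auto. field_simplify; lra. }
  destruct (Hr y eps He) as [N HN].
  specialize (HN (S N * q)%nat ltac:(nia)). specialize (Hk (S N)).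
  unfold R_dist in HN. apply Rabs_def2 in HN. destruct HN as [_ HN].
  rewrite mult_INR in HN.
  assert (HS : 0 < INR (S N)) by (apply lt_0_INR; lia).
  set (I := Defs.iter L (S N * q) y - y) in *.
  assert (E : I / (INR (S N) * INR q) * (INR (S N) * INR q) = I) by (field; lra).
  assert (rho - eps = c / INR q) by (unfold eps; ring).
  assert ((rho - eps) * (INR (S N) * INR q) < I).
  { rewrite <- E. apply Rmult_lt_compat_r; [nra|lra]. }
  assert ((rho - eps) * (INR (S N) * INR q) = INR (S N) * c).
  { rewrite H. field. lra. }
  lra.
Qed.

Lemma subseq_ge L rho y q c : is_rotation_number L rho -> (1 <= q)%nat ->
  (forall k, INR k * c <= Defs.iter L (k * q) y - y) -> c <= INR q * rho.
Proof.
  intros Hr Hq Hk. destruct (Rle_dec c (INR q * rho)) as [h|h]; auto. exfalso.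
  assert (Hq' : 0 < INR q) by (apply lt_0_INR; lia).
  set (eps := c / INR q - rho).
  assert (He : eps > 0). { unfold eps. apply Rnot_le_lt in h.
    assert (rho < c / INR q); [|lra].
    apply (Rmult_lt_reg_r (INR q)); auto. field_simplify; lra. }
  destruct (Hr y eps He) as [N HN].
  specialize (HN (S N * q)%nat ltac:(nia)). specialize (Hk (S N)).
  unfold R_dist in HN. apply Rabs_def2 in HN. destruct HN as [HN _].
  rewrite mult_INR in HN.
  assert (HS : 0 < INR (S N)) by (apply lt_0_INR; lia).
  set (I := Defs.iter L (S N * q) y - y) in *.
  assert (E : I / (INR (S N) * INR q) * (INR (S N) * INR q) = I) by (field; lra).
  assert (rho + eps = c / INR q) by (unfold eps; ring).
  assert (I < (rho + eps) * (INR (S N) * INR q)).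
  { rewrite <- E. apply Rmult_lt_compat_r; [nra|lra]. }
  assert ((rho + eps) * (INR (S N) * INR q) = INR (S N) * c).
  { rewrite H. field. lra. }
  lra.
Qed.

Lemma iter_mult_le L q p y : circle_lift L ->
  (forall y, Defs.iter L q y - y <= IZR p) ->
  forall k, Defs.iter L (k * q) y - y <= INR k * IZR p.
Proof.
  intros HL H k; induction k.
  - simpl. unfold Defs.iter; simpl; lra.
  - replace (S k * q)%nat with (q + k * q)%nat by lia. rewrite iter_add, S_INR.
    specialize (H (Defs.iter L (k * q) y)). lra.
Qed.

Lemma iter_mult_ge L q p y : circle_lift L ->
  (forall y, IZR p <= Defs.iter L q y - y) ->
  forall k, INR k * IZR p <= Defs.iter L (k * q) y - y.
Proof.
  intros HL H k; induction k.
  - simpl. unfold Defs.iter; simpl; lra.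
  - replace (S k * q)%nat with (q + k * q)%nat by lia. rewrite iter_add, S_INR.
    specialize (H (Defs.iter L (k * q) y)). lra.
Qed.

Lemma iter_mult_eq L q p y : circle_lift L ->
  Defs.iter L q y - y = IZR p ->
  forall k, Defs.iter L (k * q) y - y = INR k * IZR p.
Proof.
  intros HL H k; induction k.
  - simpl. unfold Defs.iter; simpl; lra.
  - replace (S k * q)%nat with (q + k * q)%nat by lia. rewrite iter_add, S_INR.
    replace (Defs.iter L (k * q) y) with (y + IZR (Z.of_nat k * p)).
    + rewrite iter_shift_Z; auto. rewrite mult_IZR, <- INR_IZR_INZ. lra.
    + rewrite mult_IZR, <- INR_IZR_INZ. lra.
Qed.

Lemma no_periodic L rho q p y : circle_lift L -> is_rotation_number L rho -> irrational rho ->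
  (1 <= q)%nat -> Defs.iter L q y - y <> IZR p.
Proof.
  intros HL Hr Hi Hq E.
  assert (H1 := subseq_le L rho y q (IZR p) Hr Hq
     (fun k => Req_le _ _ (iter_mult_eq L q p y HL E k))).
  assert (H2 := subseq_ge L rho y q (IZR p) Hr Hq
     (fun k => Req_le _ _ (eq_sym (iter_mult_eq L q p y HL E k)))).
  apply (Hi p (Z.of_nat q)). lia. rewrite <- INR_IZR_INZ. lra.
Qed.

Lemma IVT_gen f a b : continuity f -> f a * f b <= 0 -> exists z, f z = 0.
Proof.
  intros Hc H. destruct (Rle_dec a b).
  - destruct (IVT_cor f a b Hc r H) as [z [_ Hz]]; eauto.
  - destruct (IVT_cor f b a Hc ltac:(lra) ltac:(rewrite Rmult_comm; auto)) as [z [_ Hz]]; eauto.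
Qed.

Lemma core L rho q p : circle_lift L -> is_rotation_number L rho -> irrational rho ->
  (IZR p < INR q * rho -> forall y, IZR p < Defs.iter L q y - y) /\
  (INR q * rho < IZR p -> forall y, Defs.iter L q y - y < IZR p).
Proof.
  intros HL Hr Hi. destruct q as [|q'].
  - unfold Defs.iter; simpl. split; intros; lra.
  - set (q := S q'). assert (Hq : (1 <= q)%nat) by (unfold q; lia).
    set (G := fun y => Defs.iter L q y - y - IZR p).
    assert (Gc : continuity G).
    { unfold G. apply continuity_minus; [apply continuity_minus|].
      apply iter_cont; auto. apply derivable_continuous, derivable_id.
      apply continuity_const. intros ? ?; reflexivity. }
    assert (Gnz : forall y, G y <> 0).
    { intros y Hy. apply (no_periodic L rho q p y HL Hr Hi Hq). unfold G in Hy; lra. }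
    assert (sign : (forall y, G y < 0) \/ (forall y, 0 < G y)).
    { destruct (Rtotal_order (G 0) 0) as [h|[h|h]].
      - left. intro y. destruct (Rtotal_order (G y) 0) as [h'|[h'|h']]; auto.
        + exfalso; apply (Gnz y h').
        + exfalso. destruct (IVT_gen G 0 y Gc ltac:(nra)) as [z Hz]. apply (Gnz z Hz).
      - exfalso; apply (Gnz 0 h).
      - right. intro y. destruct (Rtotal_order (G y) 0) as [h'|[h'|h']]; auto.
        + exfalso. destruct (IVT_gen G 0 y Gc ltac:(nra)) as [z Hz]. apply (Gnz z Hz).
        + exfalso; apply (Gnz y h'). }
    split; intros Hpq y.
    + destruct sign as [S|S].
      * exfalso. assert (H := subseq_le L rho 0 q (IZR p) Hr Hq
          (iter_mult_le L q p 0 HL (fun y => ltac:(specialize (S y); unfold G in S; lra)))).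
        lra.
      * specialize (S y); unfold G in S; lra.
    + destruct sign as [S|S].
      * specialize (S y); unfold G in S; lra.
      * exfalso. assert (H := subseq_ge L rho 0 q (IZR p) Hr Hq
          (iter_mult_ge L q p 0 HL (fun y => ltac:(specialize (S y); unfold G in S; lra)))).
        lra.
Qed.

Lemma ORD L rho a b c d x : circle_lift L -> is_rotation_number L rho -> irrational rho ->
  INR a * rho + IZR b < INR c * rho + IZR d ->
  Defs.iter L a x + IZR b < Defs.iter L c x + IZR d.
Proof.
  intros HL Hr Hi H. destruct (le_lt_dec a c) as [h|h].
  - replace c with ((c - a) + a)%nat by lia. rewrite iter_add.
    set (y := Defs.iter L a x).
    destruct (core L rho (c - a) (b - d) HL Hr Hi) as [H1 _].
    assert (IZR (b - d) < INR (c - a) * rho).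
    { rewrite minus_INR by lia. rewrite minus_IZR. lra. }
    specialize (H1 H0 y). rewrite minus_IZR in H1. lra.
  - replace a with ((a - c) + c)%nat by lia. rewrite iter_add.
    set (y := Defs.iter L c x).
    destruct (core L rho (a - c) (d - b) HL Hr Hi) as [_ H1].
    assert (INR (a - c) * rho < IZR (d - b)).
    { rewrite minus_INR by lia. rewrite minus_IZR. lra. }
    specialize (H1 H0 y). rewrite minus_IZR in H1. lra.
Qed.

Lemma ORD_rev L rho a b c d x : circle_lift L -> is_rotation_number L rho -> irrational rho ->
  Defs.iter L a x + IZR b < Defs.iter L c x + IZR d ->
  INR a * rho + IZR b < INR c * rho + IZR d.
Proof.
  intros HL Hr Hi H.
  destruct (Rtotal_order (INR a * rho + IZR b) (INR c * rho + IZR d)) as [h|[h|h]]; auto.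
  - exfalso. destruct (Nat.eq_dec a c) as [e|e].
    + subst. assert (IZR b = IZR d) by lra. lra.
    + apply (Hi (d - b)%Z (Z.of_nat a - Z.of_nat c)%Z). lia.
      rewrite minus_IZR, minus_IZR, <- !INR_IZR_INZ. lra.
  - apply (ORD L rho c d a b x HL Hr Hi) in h. lra.
Qed.

Lemma floor_nat a t : 0 <= a -> 0 < t -> exists k : nat, INR k * t <= a < INR (S k) * t.
Proof.
  intros Ha Ht. destruct (base_Int_part (a / t)) as [h1 h2].
  set (z := Int_part (a / t)) in *.
  assert (0 <= a / t) by (unfold Rdiv; apply Rmult_le_pos; [lra| left; apply Rinv_0_lt_compat; lra]).
  assert (z >= 0)%Z. { assert (-1 < z)%Z by (apply lt_IZR; lra). lia. }
  exists (Z.to_nat z). rewrite S_INR, INR_IZR_INZ, Z2Nat.id by lia.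
  assert (E : a = a / t * t) by (field; lra).
  split; rewrite E at 2 || rewrite E; [apply Rmult_le_compat_r|apply Rmult_lt_compat_r]; lra.
Qed.

Lemma floor_Z T : exists j : Z, IZR j <= T < IZR j + 1.
Proof. exists (Int_part T). destruct (base_Int_part T); lra. Qed.

Lemma halve rho q p : irrational rho -> (1 <= q)%nat ->
  0 < Rabs (INR q * rho - IZR p) < 1 ->
  exists q' p', (1 <= q')%nat /\
    0 < Rabs (INR q' * rho - IZR p') <= Rabs (INR q * rho - IZR p) / 2.
Proof.
  intros Hi Hq [Ht0 Ht1]. set (t := Rabs (INR q * rho - IZR p)) in *.
  destruct (floor_nat 1 t ltac:(lra) Ht0) as [m [Hm1 Hm2]].
  assert (Hm : (1 <= m)%nat).
  { destruct m; [simpl in Hm2; lra| lia]. }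
  assert (nz : forall q' p', (1 <= q')%nat -> INR q' * rho - IZR p' <> 0).
  { intros q' p' H E. apply (Hi p' (Z.of_nat q')). lia. rewrite <- INR_IZR_INZ. lra. }
  destruct (Rle_dec 0 (INR q * rho - IZR p)) as [e|e].
  - assert (Et : t = INR q * rho - IZR p) by (apply Rabs_pos_eq; auto).
    (* r = 1 - m t = -(m q rho - (m p + 1)) ; t - r = (m+1) q rho - ((m+1) p + 1) *)
    destruct (Rle_dec (1 - INR m * t) (t / 2)).
    + exists (m * q)%nat, (Z.of_nat m * p + 1)%Z. split; [nia|].
      rewrite mult_INR, plus_IZR, mult_IZR, <- INR_IZR_INZ.
      assert (E : INR m * INR q * rho - (INR m * IZR p + 1) = - (1 - INR m * t)) by (rewrite Et; ring).
      rewrite E, Rabs_Ropp. rewrite Rabs_pos_eq by lra. split; [|lra].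
      assert (1 - INR m * t <> 0); [|lra].
      intro Z0. apply (nz (m * q)%nat (Z.of_nat m * p + 1)%Z ltac:(nia)).
      rewrite mult_INR, plus_IZR, mult_IZR, <- INR_IZR_INZ. lra.
    + exists (S m * q)%nat, (Z.of_nat (S m) * p + 1)%Z. split; [nia|].
      rewrite mult_INR, plus_IZR, mult_IZR, <- INR_IZR_INZ.
      assert (E : INR (S m) * INR q * rho - (INR (S m) * IZR p + 1) = INR (S m) * t - 1) by (rewrite Et; ring).
      rewrite E. rewrite Rabs_pos_eq by lra. rewrite S_INR in *. split; [|lra].
      assert (INR (S m) * t - 1 <> 0); [|rewrite S_INR in *; lra].
      intro Z0. apply (nz (S m * q)%nat (Z.of_nat (S m) * p + 1)%Z ltac:(nia)).
      rewrite mult_INR, plus_IZR, mult_IZR, <- INR_IZR_INZ. rewrite S_INR in *. lra.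
  - assert (Et : t = - (INR q * rho - IZR p)) by (apply Rabs_left; lra).
    destruct (Rle_dec (1 - INR m * t) (t / 2)).
    + exists (m * q)%nat, (Z.of_nat m * p - 1)%Z. split; [nia|].
      rewrite mult_INR, minus_IZR, mult_IZR, <- INR_IZR_INZ.
      assert (E : INR m * INR q * rho - (INR m * IZR p - 1) = (1 - INR m * t)) by (rewrite Et; ring).
      rewrite E. rewrite Rabs_pos_eq by lra. split; [|lra].
      assert (1 - INR m * t <> 0); [|lra].
      intro Z0. apply (nz (m * q)%nat (Z.of_nat m * p - 1)%Z ltac:(nia)).
      rewrite mult_INR, minus_IZR, mult_IZR, <- INR_IZR_INZ. lra.
    + exists (S m * q)%nat, (Z.of_nat (S m) * p - 1)%Z. split; [nia|].
      rewrite mult_INR, minus_IZR, mult_IZR, <- INR_IZR_INZ.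
      assert (E : INR (S m) * INR q * rho - (INR (S m) * IZR p - 1) = - (INR (S m) * t - 1)) by (rewrite Et; ring).
      rewrite E, Rabs_Ropp. rewrite Rabs_pos_eq by lra. rewrite S_INR in *. split; [|lra].
      assert (INR (S m) * t - 1 <> 0); [|rewrite S_INR in *; lra].
      intro Z0. apply (nz (S m * q)%nat (Z.of_nat (S m) * p - 1)%Z ltac:(nia)).
      rewrite mult_INR, minus_IZR, mult_IZR, <- INR_IZR_INZ. rewrite S_INR in *. lra.
Qed.

Lemma small_rot rho : irrational rho -> forall eps, 0 < eps ->
  exists q p, (1 <= q)%nat /\ 0 < Rabs (INR q * rho - IZR p) < eps.
Proof.
  intros Hi eps He.
  destruct (floor_Z rho) as [j0 Hj].
  assert (Hne : rho - IZR j0 <> 0).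
  { intro E. apply (Hi j0 1%Z). lia. lra. }
  set (t0 := Rabs (INR 1 * rho - IZR j0)).
  assert (Ht0 : 0 < t0 < 1).
  { unfold t0. simpl INR. rewrite Rmult_1_l, Rabs_pos_eq by lra. lra. }
  assert (Hk : forall k, exists q p, (1 <= q)%nat /\
     0 < Rabs (INR q * rho - IZR p) <= t0 * (/2) ^ k /\ Rabs (INR q * rho - IZR p) < 1).
  { induction k.
    - exists 1%nat, j0. split; [lia|]. rewrite pow_O, Rmult_1_r. fold t0. lra.
    - destruct IHk as [q [p [Hq [Hb Hb1]]]].
      destruct (halve rho q p Hi Hq ltac:(lra)) as [q' [p' [Hq' Hb']]].
      exists q', p'. split; auto. simpl. lra. }
  assert (Ha : Rabs (/2) < 1) by (rewrite Rabs_pos_eq; lra).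
  destruct (pow_lt_1_zero (/2) Ha (eps / t0)) as [N HN].
  { unfold Rdiv; apply Rmult_lt_0_compat; [lra| apply Rinv_0_lt_compat; lra]. }
  destruct (Hk N) as [q [p [Hq [Hb _]]]]. exists q, p. split; auto.
  specialize (HN N (Nat.le_refl N)). rewrite Rabs_pos_eq in HN by (left; apply pow_lt; lra).
  assert (t0 * (/2)^N < eps); [|lra].
  apply (Rmult_lt_compat_l t0) in HN; [|lra].
  replace (t0 * (eps / t0)) with eps in HN by (field; lra). lra.
Qed.

Lemma rot_dense rho : irrational rho -> forall T eps, 0 < eps ->
  exists i j, Rabs (INR i * rho + IZR j - T) < eps.
Proof.
  intros Hi T eps He. destruct (small_rot rho Hi eps He) as [q [p [Hq [Ht0 Ht1]]]].
  set (e := INR q * rho - IZR p) in *.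
  destruct (floor_Z T) as [j0 Hj].
  destruct (Rle_dec 0 e) as [h|h].
  - rewrite Rabs_pos_eq in Ht0, Ht1 by lra.
    destruct (floor_nat (T - IZR j0) e ltac:(lra) ltac:(lra)) as [k [Hk1 Hk2]].
    exists (k * q)%nat, (j0 - Z.of_nat k * p)%Z.
    rewrite mult_INR, minus_IZR, mult_IZR, <- INR_IZR_INZ. rewrite S_INR in Hk2.
    replace (INR k * INR q * rho + (IZR j0 - INR k * IZR p) - T) with (INR k * e - (T - IZR j0)) by (unfold e; ring).
    apply Rabs_def1; lra.
  - rewrite Rabs_left in Ht0, Ht1 by lra.
    destruct (floor_nat (IZR j0 + 1 - T) (- e) ltac:(lra) ltac:(lra)) as [k [Hk1 Hk2]].
    exists (k * q)%nat, (j0 + 1 - Z.of_nat k * p)%Z.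
    rewrite mult_INR, minus_IZR, plus_IZR, mult_IZR, <- INR_IZR_INZ. rewrite S_INR in Hk2.
    replace (INR k * INR q * rho + (IZR j0 + 1 - INR k * IZR p) - T) with ((IZR j0 + 1 - T) - INR k * (- e)) by (unfold e; ring).
    apply Rabs_def1; lra.
Qed.

Lemma orbit_step L n1 m1 k1 y1 i x : circle_lift L ->
  Defs.iter L n1 y1 = Defs.iter L m1 x + IZR k1 ->
  Defs.iter L i (Defs.iter L n1 y1) = Defs.iter L (i + m1) x + IZR k1.
Proof. intros HL E. rewrite E, iter_shift_Z, iter_add; auto. Qed.

Lemma fwd_dense L rho : circle_lift L -> is_rotation_number L rho -> irrational rho ->
  minimal L -> forall x z eta, 0 < eta ->
  exists i j, Rabs (Defs.iter L i x + IZR j - z) < eta.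
Proof.
  intros HL Hr Hi Hm x z eta He.
  destruct (Hm x (z - eta/2) (eta/2) ltac:(lra)) as [y1 [[n1 [m1 [k1 E1]]] D1]].
  destruct (Hm x (z + eta/2) (eta/2) ltac:(lra)) as [y2 [[n2 [m2 [k2 E2]]] D2]].
  apply Rabs_def2 in D1. apply Rabs_def2 in D2.
  set (r1 := INR m1 * rho - INR n1 * rho + IZR k1).
  set (r2 := INR m2 * rho - INR n2 * rho + IZR k2).
  assert (Hr12 : r1 < r2).
  { assert (H := iter_mono L HL (n2 + n1) y1 y2 ltac:(lra)).
    rewrite iter_add in H. rewrite Nat.add_comm in H. rewrite iter_add in H.
    rewrite (orbit_step L n1 m1 k1 y1 n2 x HL E1) in H.
    rewrite (orbit_step L n2 m2 k2 y2 n1 x HL E2) in H.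
    apply (ORD_rev L rho) in H; auto. rewrite !plus_INR in H. unfold r1, r2. lra. }
  destruct (rot_dense rho Hi ((r1 + r2)/2) ((r2 - r1)/2) ltac:(lra)) as [i [j Hij]].
  apply Rabs_def2 in Hij.
  exists i, j. apply Rabs_def1.
  - assert (Defs.iter L i x + IZR j < y2); [|lra].
    apply (iter_mono_iff L HL n2).
    rewrite iter_shift_Z, <- iter_add, E2 by auto.
    apply (ORD L rho); auto. rewrite plus_INR. unfold r2 in Hij. lra.
  - assert (y1 < Defs.iter L i x + IZR j); [|lra].
    apply (iter_mono_iff L HL n1).
    rewrite iter_shift_Z, <- iter_add, E1 by auto.
    apply (ORD L rho); auto. rewrite plus_INR. unfold r1 in Hij. lra.
Qed.

Lemma cont_at f : continuity f -> forall x eps, 0 < eps ->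
  exists d, 0 < d /\ forall y, Rabs (y - x) < d -> Rabs (f y - f x) < eps.
Proof.
  intros Hc x eps He. destruct (Hc x eps He) as [a [Ha H]].
  exists a; split; auto. intros y Hy.
  destruct (Req_dec y x) as [e|e].
  - subst. unfold Rminus; rewrite Rplus_opp_r, Rabs_R0; auto.
  - apply (H y). split; [split; [exact I| auto]| exact Hy].
Qed.

Lemma compact_unif (P : nat -> R -> Prop) :
  (forall N N' x, (N <= N')%nat -> P N x -> P N' x) ->
  (forall x, exists N, P N x) ->
  (forall N x, P N x -> exists d, 0 < d /\ forall y, Rabs (y - x) < d -> P N y) ->
  exists N, forall x, 0 <= x <= 1 -> P N x.
Proof.
  intros Hmono Hpt Hopen. apply NNPP; intro Hn.
  assert (Hseq : forall N, exists x, (0 <= x <= 1) /\ ~ P N x).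
  { intro N. apply NNPP; intro H. apply Hn. exists N. intros x Hx.
    apply NNPP; intro H'. apply H. exists x; auto. }
  set (u := fun N => proj1_sig (constructive_indefinite_description _ (Hseq N))).
  assert (Hu : forall N, (0 <= u N <= 1) /\ ~ P N (u N)).
  { intro N. unfold u. destruct (constructive_indefinite_description _ (Hseq N)); auto. }
  destruct (Bolzano_Weierstrass u (fun c => 0 <= c <= 1) (compact_P3 0 1)
     (fun N => proj1 (Hu N))) as [l Hl].
  destruct (Hpt l) as [N0 HN0].
  destruct (Hopen N0 l HN0) as [d [Hd Hy]].
  destruct (Hl (disc l (mkposreal d Hd)) N0) as [p [Hp Hv]].
  { exists (mkposreal d Hd). intros y0 H0; exact H0. }
  apply (proj2 (Hu p)). apply (Hmono N0); auto.
Qed.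

Lemma fin_max (Q : nat -> nat -> Prop) :
  (forall l N N', (N <= N')%nat -> Q l N -> Q l N') ->
  (forall l, exists N, Q l N) -> forall K, exists N, forall l, (l <= K)%nat -> Q l N.
Proof.
  intros Hm Hq K; induction K.
  - destruct (Hq 0%nat) as [N HN]. exists N. intros l Hl. replace l with 0%nat by lia. auto.
  - destruct IHK as [N HN]. destruct (Hq (S K)) as [N' HN'].
    exists (Nat.max N N'). intros l Hl. destruct (Nat.eq_dec l (S K)) as [e|e].
    + subst. apply (Hm _ N'); auto; lia.
    + apply (Hm _ N); [lia|]. apply HN; lia.
Qed.

Lemma fin_open (Q : nat -> R -> Prop) :
  (forall l x, Q l x -> exists d, 0 < d /\ forall y, Rabs (y - x) < d -> Q l y) ->
  forall K x, (forall l, (l <= K)%nat -> Q l x) ->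
  exists d, 0 < d /\ forall y, Rabs (y - x) < d -> forall l, (l <= K)%nat -> Q l y.
Proof.
  intros Ho K; induction K; intros x Hx.
  - destruct (Ho 0%nat x (Hx 0%nat (Nat.le_refl 0))) as [d [Hd H]].
    exists d; split; auto. intros y Hy l Hl. replace l with 0%nat by lia. auto.
  - destruct (IHK x (fun l Hl => Hx l ltac:(lia))) as [d1 [Hd1 H1]].
    destruct (Ho (S K) x (Hx (S K) (Nat.le_refl _))) as [d2 [Hd2 H2]].
    exists (Rmin d1 d2). split; [apply Rmin_pos; auto|].
    intros y Hy l Hl. assert (Rmin d1 d2 <= d1) by apply Rmin_l.
    assert (Rmin d1 d2 <= d2) by apply Rmin_r.
    destruct (Nat.eq_dec l (S K)) as [e|e].
    + subst. apply H2. lra.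
    + apply H1; [lra| lia].
Qed.

Lemma unif_dense L rho : circle_lift L -> is_rotation_number L rho -> irrational rho ->
  minimal L -> forall eta, 0 < eta -> exists N, forall x z,
  exists i, (i <= N)%nat /\ exists j, Rabs (Defs.iter L i x + IZR j - z) < eta.
Proof.
  intros HL Hr Hi Hm eta He.
  destruct (floor_nat 1 (eta/2) ltac:(lra) ltac:(lra)) as [k [_ Hk]].
  set (M := S k). fold M in Hk.
  assert (HM : 0 < INR M) by (apply lt_0_INR; unfold M; lia).
  set (g := fun l : nat => INR l / INR M).
  set (P := fun N x => forall l, (l <= M)%nat -> exists i, (i <= N)%nat /\ exists j,
      Rabs (Defs.iter L i x + IZR j - g l) < eta / 2).
  assert (Hmono : forall N N' x, (N <= N')%nat -> P N x -> P N' x).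
  { intros N N' x HN H l Hl. destruct (H l Hl) as [i [Hi' Hj]]. exists i. split; auto. lia. }
  assert (Hpt : forall x, exists N, P N x).
  { intro x. unfold P.
    apply (fin_max (fun l N => exists i, (i <= N)%nat /\ exists j,
      Rabs (Defs.iter L i x + IZR j - g l) < eta / 2)).
    - intros l N N' HN [i [Hi' Hj]]. exists i. split; auto. lia.
    - intro l. destruct (fwd_dense L rho HL Hr Hi Hm x (g l) (eta/2) ltac:(lra)) as [i [j Hj]].
      exists i, i. split; eauto. }
  assert (Hopen : forall N x, P N x -> exists d, 0 < d /\ forall y, Rabs (y - x) < d -> P N y).
  { intros N x H. unfold P. apply fin_open; auto.
    intros l x0 [i [Hi' [j Hj]]].
    destruct (cont_at (Defs.iter L i) (iter_cont L HL i) x0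
       (eta/2 - Rabs (Defs.iter L i x0 + IZR j - g l)) ltac:(lra)) as [d [Hd Hc]].
    exists d. split; auto. intros y Hy. exists i. split; auto. exists j.
    specialize (Hc y Hy).
    replace (Defs.iter L i y + IZR j - g l) with
      ((Defs.iter L i y - Defs.iter L i x0) + (Defs.iter L i x0 + IZR j - g l)) by ring.
    eapply Rle_lt_trans; [apply Rabs_triang|]. lra. }
  destruct (compact_unif P Hmono Hpt Hopen) as [N HN].
  exists N. intros x z.
  destruct (base_Int_part x) as [hx1 hx2]. destruct (base_Int_part z) as [hz1 hz2].
  set (kx := Int_part x) in *. set (kz := Int_part z) in *.
  set (x0 := x - IZR kx). set (z0 := z - IZR kz).
  destruct (floor_nat z0 (/ INR M) ltac:(unfold z0; lra) ltac:(apply Rinv_0_lt_compat; lra)) as [l [Hl1 Hl2]].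
  assert (HlM : (l <= M)%nat).
  { assert (INR l < INR M); [|apply INR_lt in H; lia].
    assert (INR l * / INR M < 1) by (unfold z0 in *; lra).
    apply (Rmult_lt_reg_r (/ INR M)); [apply Rinv_0_lt_compat; lra|].
    rewrite Rinv_r by lra. lra. }
  destruct (HN x0 ltac:(unfold x0; lra) l HlM) as [i [Hi' [j Hj]]].
  exists i. split; auto. exists (j - kx + kz)%Z.
  assert (Ex : x = x0 + IZR kx) by (unfold x0; ring).
  rewrite Ex, iter_shift_Z by auto.
  rewrite plus_IZR, minus_IZR.
  replace (Defs.iter L i x0 + IZR kx + (IZR j - IZR kx + IZR kz) - z) with
    ((Defs.iter L i x0 + IZR j - g l) + (g l - z0)) by (unfold z0; ring).
  eapply Rle_lt_trans; [apply Rabs_triang|].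
  assert (Rabs (g l - z0) < eta / 2); [|lra].
  unfold g. rewrite S_INR in Hl2. unfold Rdiv.
  assert (/ INR M < eta / 2).
  { apply (Rmult_lt_reg_r (INR M)); auto. rewrite Rinv_l by lra. lra. }
  apply Rabs_def1; lra.
Qed.

Lemma unif_cont_lift L : circle_lift L -> forall eps, 0 < eps ->
  exists d, 0 < d /\ forall u v, Rabs (u - v) < d -> Rabs (L u - L v) < eps.
Proof.
  intros HL eps He.
  assert (Hh := Heine L (fun c => -1 <= c <= 2) (compact_P3 (-1) 2)
    (fun x _ => proj1 HL x)).
  destruct (Hh (mkposreal eps He)) as [d0 Hd0].
  exists (Rmin d0 1). split. { apply Rmin_pos; [apply cond_pos| lra]. }
  intros u v Huv.
  assert (Rmin d0 1 <= d0) by apply Rmin_l. assert (Rmin d0 1 <= 1) by apply Rmin_r.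
  destruct (base_Int_part u) as [h1 h2]. set (k := Int_part u) in *.
  assert (Eu : u = (u - IZR k) + IZR k) by ring.
  assert (Ev : v = (v - IZR k) + IZR k) by ring.
  rewrite Eu, Ev, !lift_shift_Z by auto.
  replace (L (u - IZR k) + IZR k - (L (v - IZR k) + IZR k)) with
    (L (u - IZR k) - L (v - IZR k)) by ring.
  apply Rabs_def2 in Huv.
  apply Hd0; simpl; try lra. apply Rabs_def1; lra.
Qed.

Lemma finite_close L : circle_lift L -> forall N eta, 0 < eta ->
  exists d, 0 < d /\ forall Psi, (forall x, Rabs (Psi x - L x) < d) ->
  forall a x, (a <= N)%nat -> Rabs (Defs.iter Psi a x - Defs.iter L a x) < eta.
Proof.
  intros HL N; induction N; intros eta He.
  - exists 1. split; [lra|]. intros Psi _ a x Ha. replace a with 0%nat by lia.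
    unfold Defs.iter; simpl. unfold Rminus; rewrite Rplus_opp_r, Rabs_R0; auto.
  - destruct (unif_cont_lift L HL (eta/2) ltac:(lra)) as [d1 [Hd1 Hu]].
    destruct (IHN (Rmin eta d1) ltac:(apply Rmin_pos; lra)) as [d' [Hd' H']].
    exists (Rmin d' (eta/2)). split; [apply Rmin_pos; lra|].
    intros Psi HP a x Ha.
    assert (Rmin eta d1 <= eta) by apply Rmin_l. assert (Rmin eta d1 <= d1) by apply Rmin_r.
    assert (Rmin d' (eta/2) <= d') by apply Rmin_l. assert (Rmin d' (eta/2) <= eta/2) by apply Rmin_r.
    assert (HP' : forall x, Rabs (Psi x - L x) < d') by (intro y; specialize (HP y); lra).
    destruct (Nat.eq_dec a (S N)) as [e|e].
    + subst. rewrite !iter_S.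
      set (y := Defs.iter Psi N x). set (y' := Defs.iter L N x).
      assert (Hyy : Rabs (y - y') < Rmin eta d1) by (apply H'; auto).
      replace (Psi y - L y') with ((Psi y - L y) + (L y - L y')) by ring.
      eapply Rle_lt_trans; [apply Rabs_triang|].
      specialize (HP y). assert (Rabs (L y - L y') < eta/2) by (apply Hu; lra). lra.
    + assert (Rabs (Defs.iter Psi a x - Defs.iter L a x) < Rmin eta d1) by (apply H'; auto; lia).
      lra.
Qed.

Lemma orbit_close L rho : circle_lift L -> is_rotation_number L rho -> irrational rho ->
  minimal L -> forall eta, 0 < eta -> exists d, 0 < d /\ forall Psi,
  circle_lift Psi -> is_rotation_number Psi rho -> (forall x, Rabs (Psi x - L x) < d) ->
  forall n x, Rabs (Defs.iter Psi n x - Defs.iter L n x) < eta.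
Proof.
  intros HL Hr Hi Hm eta He.
  destruct (unif_dense L rho HL Hr Hi Hm (eta/4) ltac:(lra)) as [N HN].
  destruct (finite_close L HL N (eta/4) ltac:(lra)) as [d [Hd Hc]].
  exists d. split; auto. intros Psi HPsi HrP Hclose n x.
  set (P := Defs.iter L n x).
  destruct (HN x (P - eta/2)) as [a [Ha [b Hb]]].
  destruct (HN x (P + eta/2)) as [c [Hc' [e He']]].
  apply Rabs_def2 in Hb. apply Rabs_def2 in He'.
  assert (H1 : Defs.iter L a x + IZR b < Defs.iter L n x + IZR 0) by (simpl; unfold P in *; lra).
  assert (H2 : Defs.iter L n x + IZR 0 < Defs.iter L c x + IZR e) by (simpl; unfold P in *; lra).
  apply (ORD_rev L rho) in H1; auto. apply (ORD_rev L rho) in H2; auto.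
  apply (ORD Psi rho a b n 0 x) in H1; auto. apply (ORD Psi rho n 0 c e x) in H2; auto.
  simpl in H1, H2. rewrite Rplus_0_r in H1, H2.
  assert (Ha' := Hc Psi Hclose a x Ha). assert (Hc'' := Hc Psi Hclose c x Hc').
  apply Rabs_def2 in Ha'. apply Rabs_def2 in Hc''.
  apply Rabs_def1; unfold P in *; lra.
Qed.

Lemma sin_lip u v : Rabs (sin u - sin v) <= Rabs (u - v).
Proof.
  destruct (MVT_abs sin cos v u (fun c _ => derivable_pt_lim_sin c)) as [c [E _]].
  rewrite E. assert (Rabs (cos c) <= 1) by (apply Rabs_le; apply COS_bound).
  assert (0 <= Rabs (u - v)) by apply Rabs_pos. nra.
Qed.

Lemma sin_shift_nat a m : Rabs (sin (PI * (a + INR m))) = Rabs (sin (PI * a)).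
Proof.
  induction m.
  - simpl. rewrite Rplus_0_r; auto.
  - rewrite S_INR. replace (PI * (a + (INR m + 1))) with (PI * (a + INR m) + PI) by ring.
    rewrite neg_sin, Rabs_Ropp; auto.
Qed.

Lemma sin_shift a z : Rabs (sin (PI * (a + IZR z))) = Rabs (sin (PI * a)).
Proof.
  destruct (IZR_nat_or_neg z) as [m [E|E]]; rewrite E.
  - apply sin_shift_nat.
  - rewrite <- (sin_shift_nat (a + - INR m) m). f_equal. f_equal. f_equal. ring.
Qed.

Lemma per_min g : continuity g -> (forall y k, g (y + IZR k) = g y) ->
  exists y0, forall y, g y0 <= g y.
Proof.
  intros Hc Hp. destruct (continuity_ab_min g 0 1 ltac:(lra) (fun c _ => Hc c)) as [m [Hm _]].
  exists m. intro y. destruct (base_Int_part y) as [h1 h2].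
  assert (E : g y = g (y - IZR (Int_part y))).
  { rewrite <- (Hp (y - IZR (Int_part y)) (Int_part y)). f_equal. ring. }
  rewrite E.
  apply Hm. lra.
Qed.

Lemma iter_sub_fun Psi m : circle_lift Psi -> forall n x,
  Defs.iter (fun y => Psi y - IZR m) n x = Defs.iter Psi n x - INR n * IZR m.
Proof.
  intros HP n; induction n; intro x.
  - unfold Defs.iter; simpl; ring.
  - rewrite !iter_S, IHn.
    replace (Defs.iter Psi n x - INR n * IZR m) with (Defs.iter Psi n x + IZR (- (Z.of_nat n * m))).
    + rewrite lift_shift_Z by auto. rewrite opp_IZR, mult_IZR, <- INR_IZR_INZ, S_INR. ring.
    + rewrite opp_IZR, mult_IZR, <- INR_IZR_INZ. ring.
Qed.

Lemma lift_sub Psi m : circle_lift Psi -> circle_lift (fun y => Psi y - IZR m).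
Proof.
  intros [Hc [Hm Hp]]. split; [|split].
  - apply continuity_minus; auto. apply continuity_const. intros ? ?; reflexivity.
  - intros x y H. specialize (Hm x y H). lra.
  - intro x. rewrite Hp. ring.
Qed.

Lemma rot_sub Psi m r : circle_lift Psi -> is_rotation_number Psi r ->
  is_rotation_number (fun y => Psi y - IZR m) (r - IZR m).
Proof.
  intros HP Hr x eps He. destruct (Hr x eps He) as [N HN].
  exists (Nat.max N 1). intros n Hn. specialize (HN n ltac:(lia)).
  rewrite iter_sub_fun by auto.
  assert (0 < INR n) by (apply lt_0_INR; lia).
  unfold R_dist in *.
  replace ((Defs.iter Psi n x - INR n * IZR m - x) / INR n - (r - IZR m)) with
    ((Defs.iter Psi n x - x) / INR n - r) by (field; lra). auto.
Qed.

Lemma irr_shift rho z : irrational rho -> irrational (rho + IZR z).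
Proof.
  intros Hi p q Hq E. apply (Hi (p - z * q)%Z q Hq).
  rewrite minus_IZR, mult_IZR. lra.
Qed.

Lemma radius_F L n x0 : (1 <= n)%nat ->
  radius L n x0 = / 2 * Rabs (/ sin (PI * (L (Defs.iter L (n - 1) x0) - Defs.iter L (n - 1) x0))).
Proof.
  intros Hn. destruct n; [lia|]. unfold radius.
  replace (S n - 1)%nat with n by lia. rewrite iter_S. reflexivity.
Qed.

Lemma not_int_sin a j : IZR j < a < IZR j + 1 -> sin (PI * a) <> 0.
Proof.
  intros H E. apply sin_eq_0_0 in E. destruct E as [k Hk].
  assert (a = IZR k). { assert (PI > 0) by apply PI_RGT_0. nra. }
  subst. destruct H as [H1 H2]. apply lt_IZR in H1. rewrite <- plus_IZR in H2.
  apply lt_IZR in H2. lia.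
Qed.

Lemma circ_int a b c : circ_dist a b <= c -> exists m : Z, Rabs (b - a - IZR m) <= c.
Proof.
  intro H. unfold circ_dist in H. cbv zeta in H.
  destruct (base_Int_part (b - a)) as [h1 h2].
  unfold Rmin in H. destruct (Rle_dec _ _) in H.
  - exists (Int_part (b - a)). rewrite Rabs_pos_eq by lra. lra.
  - exists (Int_part (b - a) + 1)%Z. rewrite plus_IZR. apply Rabs_le. lra.
Qed.

Lemma circ_nonneg a b : 0 <= circ_dist a b.
Proof.
  unfold circ_dist. cbv zeta. destruct (base_Int_part (b - a)) as [h1 h2].
  unfold Rmin. destruct (Rle_dec _ _); lra.
Qed.

Lemma abs_le_inv x b : Rabs x <= b -> - b <= x <= b.
Proof. intro H. assert (H1 := Rle_abs x). assert (H2 := Rle_abs (- x)). rewrite Rabs_Ropp in H2. lra. Qed.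

Lemma inv_diff A B S0 e t : 0 < S0 -> S0 <= A -> Rabs (A - B) <= t -> t <= S0 / 2 ->
  t <= e * S0 * S0 / 2 -> Rabs (/ 2 * / A - / 2 * / B) <= e / 2.
Proof.
  intros HS HA Ht Ht1 Ht2. apply abs_le_inv in Ht.
  assert (HB : S0 / 2 <= B) by lra.
  assert (iA : / A <= / S0) by (apply Rinv_le_contravar; lra).
  assert (iB : / B <= / (S0 / 2)) by (apply Rinv_le_contravar; lra).
  assert (pA : 0 < / A) by (apply Rinv_0_lt_compat; lra).
  assert (pB : 0 < / B) by (apply Rinv_0_lt_compat; lra).
  assert (E : / 2 * / A - / 2 * / B = / 2 * ((B - A) * (/ A * / B))) by (field; lra).
  rewrite E, Rabs_mult, Rabs_mult, (Rabs_pos_eq (/2)) by lra.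
  rewrite (Rabs_pos_eq (/ A * / B)) by nra.
  assert (Rabs (B - A) <= t) by (apply Rabs_le; lra).
  assert (/ A * / B <= / S0 * / (S0 / 2)) by (apply Rmult_le_compat; lra).
  assert (Ei : / S0 * / (S0 / 2) = 2 / (S0 * S0)) by (field; lra).
  assert (t * (2 / (S0 * S0)) <= e).
  { apply (Rmult_le_reg_r (S0 * S0 / 2)). nra.
    replace (t * (2 / (S0 * S0)) * (S0 * S0 / 2)) with t by (field; lra). lra. }
  assert (0 <= Rabs (B - A)) by apply Rabs_pos.
  assert (Rabs (B - A) * (/ A * / B) <= t * (2 / (S0 * S0))) by (rewrite <- Ei; apply Rmult_le_compat; nra).
  lra.
Qed.

Theorem proposition5p7 :
  forall (Phi : R -> R) (rho eps : R),
    circle_lift Phi -> minimal Phi ->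
    is_rotation_number Phi rho -> irrational rho ->
    0 < eps ->
    exists delta, 0 < delta /\
      forall Psi : R -> R,
        circle_lift Psi -> minimal Psi ->
        (exists k : Z, is_rotation_number Psi (rho + IZR k)) ->
        C0_close Phi Psi delta ->
        exists c, c < eps /\
          forall (x0 : R) (n : nat), (1 <= n)%nat ->
            Rabs (radius Phi n x0 - radius Psi n x0) <= c.
Proof.
  intros Phi rho eps HL Hm Hr Hi He.
  assert (HPI : PI > 0) by apply PI_RGT_0.
  destruct (floor_Z rho) as [j0 Hj].
  assert (Hj' : IZR j0 < rho).
  { destruct Hj as [[h|h] _]; auto. exfalso. apply (Hi j0 1%Z); [lia|]. rewrite <- h. ring. }
  assert (HB : forall y, IZR j0 < Phi y - y < IZR j0 + 1).
  { intro y. destruct (core Phi rho 1 j0 HL Hr Hi) as [H1 _].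
    destruct (core Phi rho 1 (j0 + 1) HL Hr Hi) as [_ H2].
    simpl INR in H1, H2. rewrite plus_IZR in H2.
    specialize (H1 ltac:(lra) y). specialize (H2 ltac:(lra) y).
    unfold Defs.iter in H1, H2; simpl in H1, H2. lra. }
  assert (C1 : continuity (fun y => Phi y - y)).
  { apply (continuity_minus Phi (fun y => y)); [apply HL| exact (derivable_continuous _ derivable_id)]. }
  assert (C2 : continuity (fun y => PI * (Phi y - y))) by exact (continuity_scal _ PI C1).
  assert (C3 : continuity (fun y => Rabs (sin (PI * (Phi y - y))))).
  { exact (continuity_comp _ Rabs (continuity_comp _ sin C2 continuity_sin) Rcontinuity_abs). }
  destruct (per_min _ C3) as [y0 Hy0].
  { intros y kk. cbv beta. rewrite (lift_shift_Z Phi HL). replace (Phi y + IZR kk - (y + IZR kk)) with (Phi y - y) by ring; reflexivity. }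
  set (S0 := Rabs (sin (PI * (Phi y0 - y0)))) in Hy0.
  assert (HS0 : 0 < S0).
  { apply Rabs_pos_lt. apply (not_int_sin _ j0). apply HB. }
  set (s0 := Rmin (Phi 0 - 0 - IZR j0) (IZR j0 + 1 - (Phi 0 - 0))).
  assert (Hs0 : 0 < s0) by (unfold s0; apply Rmin_pos; specialize (HB 0); lra).
  assert (Hs0a : s0 <= Phi 0 - 0 - IZR j0) by apply Rmin_l.
  assert (Hs0b : s0 <= IZR j0 + 1 - (Phi 0 - 0)) by apply Rmin_r.
  set (tau := Rmin (S0 / (2 * PI)) (eps * S0 * S0 / (2 * PI))).
  assert (Htau : 0 < tau).
  { unfold tau; apply Rmin_pos; unfold Rdiv; repeat apply Rmult_lt_0_compat; try lra;
    apply Rinv_0_lt_compat; lra. }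
  assert (Htau1 : PI * tau <= S0 / 2).
  { assert (tau <= S0 / (2 * PI)) by apply Rmin_l.
    apply (Rmult_le_compat_l PI) in H; [|lra].
    replace (PI * (S0 / (2 * PI))) with (S0 / 2) in H by (field; lra). lra. }
  assert (Htau2 : PI * tau <= eps * S0 * S0 / 2).
  { assert (tau <= eps * S0 * S0 / (2 * PI)) by apply Rmin_r.
    apply (Rmult_le_compat_l PI) in H; [|lra].
    replace (PI * (eps * S0 * S0 / (2 * PI))) with (eps * S0 * S0 / 2) in H by (field; lra). lra. }
  destruct (unif_cont_lift Phi HL (tau / 3) ltac:(lra)) as [eta1 [Heta1 Hu]].
  set (eta := Rmin eta1 (tau / 3)).
  assert (Heta : 0 < eta) by (apply Rmin_pos; lra).
  assert (Heta_a : eta <= eta1) by apply Rmin_l.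
  assert (Heta_b : eta <= tau / 3) by apply Rmin_r.
  destruct (orbit_close Phi rho HL Hr Hi Hm eta Heta) as [d0 [Hd0 Horb]].
  set (delta := Rmin (Rmin d0 (tau / 3)) (Rmin s0 (1 / 4))).
  exists delta. split.
  { unfold delta. repeat apply Rmin_pos; lra. }
  intros Psi HPsi _ [k HrPsi] [c [Hc Hcd]].
  assert (Hd1 : delta <= Rmin d0 (tau / 3)) by apply Rmin_l.
  assert (Hd2 : delta <= Rmin s0 (1 / 4)) by apply Rmin_r.
  assert (Rmin d0 (tau / 3) <= d0) by apply Rmin_l.
  assert (Rmin d0 (tau / 3) <= tau / 3) by apply Rmin_r.
  assert (Rmin s0 (1 / 4) <= s0) by apply Rmin_l.
  assert (Rmin s0 (1 / 4) <= 1 / 4) by apply Rmin_r.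
  assert (Hc0 : 0 <= c) by (eapply Rle_trans; [apply circ_nonneg| apply (Hcd 0)]).
  assert (Hmx : forall x, exists m : Z, Rabs (Psi x - Phi x - IZR m) <= c).
  { intro x. apply circ_int. apply Hcd. }
  destruct (Hmx 0) as [m0 Hm0].
  assert (CD : continuity (fun y => Psi y - Phi y)).
  { apply (continuity_minus Psi Phi); [apply HPsi| apply HL]. }
  assert (Hconst : forall x, Rabs (Psi x - Phi x - IZR m0) <= c).
  { intro x. destruct (Hmx x) as [mx Hmxx].
    destruct (Z.eq_dec mx m0) as [e|ne]; [subst; auto|exfalso].
    apply abs_le_inv in Hmxx. apply abs_le_inv in Hm0.
    destruct (Z_lt_le_dec m0 mx) as [lt|le].
    - assert (IZR m0 + 1 <= IZR mx) by (rewrite <- plus_IZR; apply IZR_le; lia).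
      set (G := fun y => (Psi y - Phi y) - (IZR m0 + 1/2)).
      assert (CG : continuity G).
      { apply (continuity_minus (fun y => Psi y - Phi y) (fun _ => IZR m0 + 1/2)); auto.
        apply continuity_const. intros ? ?; reflexivity. }
      destruct (IVT_gen G 0 x CG) as [w Hw].
      { assert (G 0 < 0) by (unfold G; lra). assert (0 < G x) by (unfold G; lra). nra. }
      unfold G in Hw. destruct (Hmx w) as [mw Hmw]. apply abs_le_inv in Hmw.
      assert (h1 : (m0 < mw)%Z) by (apply lt_IZR; lra).
      assert (h2 : (mw < m0 + 1)%Z) by (apply lt_IZR; rewrite plus_IZR; lra). lia.
    - assert (IZR mx + 1 <= IZR m0) by (rewrite <- plus_IZR; apply IZR_le; lia).
      set (G := fun y => (Psi y - Phi y) - (IZR m0 - 1/2)).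
      assert (CG : continuity G).
      { apply (continuity_minus (fun y => Psi y - Phi y) (fun _ => IZR m0 - 1/2)); auto.
        apply continuity_const. intros ? ?; reflexivity. }
      destruct (IVT_gen G 0 x CG) as [w Hw].
      { assert (0 < G 0) by (unfold G; lra). assert (G x < 0) by (unfold G; lra). nra. }
      unfold G in Hw. destruct (Hmx w) as [mw Hmw]. apply abs_le_inv in Hmw.
      assert (h1 : (m0 - 1 < mw)%Z) by (apply lt_IZR; rewrite minus_IZR; lra).
      assert (h2 : (mw < m0)%Z) by (apply lt_IZR; lra). lia. }
  set (Psi' := fun y => Psi y - IZR m0).
  assert (HL' : circle_lift Psi') by (apply lift_sub; auto).
  assert (Hcl : forall x, Rabs (Psi' x - Phi x) <= c).
  { intro x. unfold Psi'. replace (Psi x - IZR m0 - Phi x) with (Psi x - Phi x - IZR m0) by ring. auto. }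
  assert (Hr' : is_rotation_number Psi' (rho + IZR (k - m0))).
  { replace (rho + IZR (k - m0)) with (rho + IZR k - IZR m0) by (rewrite minus_IZR; ring).
    apply rot_sub; auto. }
  assert (Hi' : irrational (rho + IZR (k - m0))) by (apply irr_shift; auto).
  assert (Hk : (k - m0)%Z = 0%Z).
  { assert (A0 := Hcl 0). apply abs_le_inv in A0.
    assert (Hlow : IZR j0 < rho + IZR (k - m0)).
    { destruct (Rtotal_order (rho + IZR (k - m0)) (IZR j0)) as [h|[h|h]]; auto; exfalso.
      - destruct (core Psi' _ 1 j0 HL' Hr' Hi') as [_ K2]. simpl INR in K2.
        specialize (K2 ltac:(lra) 0). unfold Defs.iter in K2; simpl in K2. lra.
      - apply (Hi' j0 1%Z); [lia|]. rewrite h; ring. }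
    assert (Hup : rho + IZR (k - m0) < IZR j0 + 1).
    { destruct (Rtotal_order (rho + IZR (k - m0)) (IZR j0 + 1)) as [h|[h|h]]; auto; exfalso.
      - apply (Hi' (j0 + 1)%Z 1%Z); [lia|]. rewrite h, plus_IZR; ring.
      - destruct (core Psi' _ 1 (j0 + 1) HL' Hr' Hi') as [K1 _]. simpl INR in K1.
        rewrite plus_IZR in K1.
        specialize (K1 ltac:(lra) 0). unfold Defs.iter in K1; simpl in K1. lra. }
    assert (h1 : (-1 < k - m0)%Z) by (apply lt_IZR; lra).
    assert (h2 : (k - m0 < 1)%Z) by (apply lt_IZR; lra). lia. }
  rewrite Hk in Hr'. replace (rho + IZR 0) with rho in Hr' by (simpl; ring).
  assert (Hcd0 : c < d0) by lra.
  assert (Horb' := Horb Psi' HL' Hr' (fun x => Rle_lt_trans _ c d0 (Hcl x) Hcd0)).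
  exists (eps / 2). split; [lra|]. intros x0 n Hn.
  rewrite !radius_F by auto.
  set (y := Defs.iter Phi (n - 1) x0).
  set (Y := Defs.iter Psi (n - 1) x0).
  set (y' := Defs.iter Psi' (n - 1) x0).
  assert (EY : y' = Y + IZR (- (Z.of_nat (n - 1) * m0))).
  { unfold y', Y, Psi'. rewrite iter_sub_fun by auto. rewrite opp_IZR, mult_IZR, <- INR_IZR_INZ. ring. }
  assert (Es : Rabs (sin (PI * (Psi Y - Y))) = Rabs (sin (PI * (Psi' y' - y')))).
  { rewrite <- (sin_shift (Psi' y' - y') m0).
    replace (Psi' y' - y' + IZR m0) with (Psi Y - Y); [reflexivity|].
    unfold Psi'. rewrite EY, (lift_shift_Z Psi HPsi). ring. }
  rewrite !Rabs_inv, Es.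
  apply (inv_diff _ _ S0 eps (PI * tau)); [lra | apply Hy0 | | lra | lra].
  eapply Rle_trans; [apply Rabs_triang_inv2|].
  eapply Rle_trans; [apply sin_lip|].
  replace (PI * (Phi y - y) - PI * (Psi' y' - y')) with (PI * ((Phi y - y) - (Psi' y' - y'))) by ring.
  rewrite Rabs_mult, (Rabs_pos_eq PI) by lra.
  apply Rmult_le_compat_l; [lra|].
  assert (Hyy : Rabs (y' - y) < eta) by apply Horb'.
  assert (Hyy' : Rabs (y - y') < eta) by (rewrite Rabs_minus_sym; auto).
  assert (HPhi : Rabs (Phi y - Phi y') < tau / 3) by (apply Hu; lra).
  assert (Hc' := Hcl y').
  apply abs_le_inv in Hc'. apply Rabs_def2 in Hyy. apply Rabs_def2 in HPhi.
  apply Rabs_le. lra.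
Qed.
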